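(* Let $K$ be a field and let $L\in K^{n\times n}[s]$, $L_1\in K^{n_1\times n_1}[s]$ be nonsingular polynomial matrices. A map $\phi:U^L\to U^{L_1}$ is a $K_\infty(s)$-module homomorphism if and only if there exist matrices $\Theta,\Theta_1\in K^{n_1\times n}_\infty(s)$ such that $$\Theta L=L_1\Theta_1\qquad\text{and}\qquad \phi\bar x=\rho_e^{L_1}(\Theta\bar x)\ \text{ for all }\bar x\in U^L.$$ Moreover, if $\Theta,\Theta_1\in K^{n_1\times n}_\infty(s)$ satisfy $\Theta L=L_1\Theta_1$, then $\rho_e^{L_1}(\Theta\bar x)=\rho^{L_1}(\Theta x)$ for all $x\in K^n_\infty(s)$, where $\bar x=\rho^L x$.
   Context: $K(s)$ denotes the field of rational functions over $K$. A rational function $f$ is proper if $f=0$ or $f=p/q$ with $p,q\in K[s]$, $q\ne0$, $\deg p\le\deg q$; $K_\infty(s)$ is the ring of proper rational functions, and $K^n_\infty(s)$, $K^{m\times r}_\infty(s)$ denote vectors/matrices with proper rational entries. One has $K(s)=K[s]\oplus s^{-1}K_\infty(s)$; $\pi_+:K(s)\to K[s]$ denotes the projection onto the polynomial part along $s^{-1}K_\infty(s)$, extended entrywise to vectors and matrices. For a nonsingular $L\in K^{n\times n}[s]$, define $\rho^L:K^n_\infty(s)\to K^n[s]$ by $\rho^L x=L\,\pi_+(L^{-1}x)$, write $\bar x=\rho^Lx$, and let $U^L=\operatorname{Im}\rho^L$. Since $\operatorname{Ker}\rho^L=K^n_\infty(s)\cap s^{-1}LK^n_\infty(s)$, $U^L$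 is a $K_\infty(s)$-module via $q\cdot\bar x=\overline{qx}$ for $q\in K_\infty(s)$. The extension $\rho_e^{L_1}:K^{n_1}(s)\to K^{n_1}[s]$ is defined by $\rho_e^{L_1}w=L_1\pi_+(L_1^{-1}w)$ for $w\in K^{n_1}(s)$. *)

(* Defs.v *)
From HB Require Import structures.
From mathcomp Require Import all_boot all_order all_algebra.
Set Implicit Arguments. Unset Strict Implicit. Unset Printing Implicit Defensive.
Import GRing.Theory.
Local Open Scope ring_scope.
Local Open Scope quotient_scope.

Section Defs.
Variable K : fieldType.

Definition rfun := {fraction {poly K}}.
Definition tofr (p : {poly K}) : rfun := @FracField.tofrac _ p.

Definition proper (f : rfun) : Prop :=
  exists p q : {poly K}, q != 0 /\ (size p <= size q)%N /\ f = tofr p / tofr q.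

Definition pi_plus (f : rfun) : {poly K} :=
  let r := repr f in (\n_r %/ \d_r)%R.

Definition vproper n (x : 'cV[rfun]_n) : Prop := forall i, proper (x i 0).
Definition mproper m r (A : 'M[rfun]_(m, r)) : Prop := forall i j, proper (A i j).

Definition mx_pi_plus m r (A : 'M[rfun]_(m, r)) : 'M[{poly K}]_(m, r) :=
  map_mx pi_plus A.
Definition mx_tofr m r (A : 'M[{poly K}]_(m, r)) : 'M[rfun]_(m, r) :=
  map_mx tofr A.

Definition rho_e n (L : 'M[{poly K}]_n) (w : 'cV[rfun]_n) : 'cV[{poly K}]_n :=
  L *m mx_pi_plus (invmx (mx_tofr L) *m w).

(* rho^L : restriction of rho_e^L to proper vectors *)
Definition rho n (L : 'M[{poly K}]_n) (x : 'cV[rfun]_n) : 'cV[{poly K}]_n :=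
  rho_e L x.

Definition UL n (L : 'M[{poly K}]_n) (y : 'cV[{poly K}]_n) : Prop :=
  exists x : 'cV[rfun]_n, vproper x /\ y = rho L x.

Definition nonsingular n (L : 'M[{poly K}]_n) : Prop := \det L != 0.

(* K_oo(s)-module homomorphism U^L -> U^{L1}, where the module structure on
   U^L is  q . rho^L x = rho^L (q x)  and addition is that of K^n[s]. *)
Definition Kinf_hom n n1 (L : 'M[{poly K}]_n) (L1 : 'M[{poly K}]_n1)
  (phi : 'cV[{poly K}]_n -> 'cV[{poly K}]_n1) : Prop :=
  (forall x y : 'cV[rfun]_n, vproper x -> vproper y ->
     phi (rho L x + rho L y) = phi (rho L x) + phi (rho L y)) /\
  (forall (q : rfun) (x : 'cV[rfun]_n) (y : 'cV[rfun]_n1),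
     proper q -> vproper x -> vproper y ->
     phi (rho L x) = rho L1 y ->
     phi (rho L (q *: x)) = rho L1 (q *: y)).

End Defs.

(* Main.v *)
Require Import Defs.
From HB Require Import structures.
From mathcomp Require Import all_boot all_order all_algebra.
From mathcomp Require Import ring zify.
From Stdlib Require Import ClassicalEpsilon.
Import GRing.Theory.
Set Implicit Arguments. Unset Strict Implicit. Unset Printing Implicit Defensive.
Local Open Scope ring_scope.
Local Open Scope quotient_scope.

Lemma nat_addlem S A B p1 q1 p2 q2 : (S <= maxn A B)%N -> (A <= (p1+q2).-1)%N ->
  (B <= (p2+q1).-1)%N -> (p1<=q1)%N -> (p2<=q2)%N -> (S <= (q1+q2).-1)%N.
Proof. lia. Qed.
Lemma nat_mullem A p1 q1 p2 q2 : (A <= (p1+p2).-1)%N -> (p1<=q1)%N -> (p2<=q2)%N -> (A <= (q1+q2).-1)%N.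
Proof. lia. Qed.
Lemma nat_Xlem A r q : (A <= (2 + r).-1)%N -> (r < q)%N -> (A <= q)%N.
Proof. lia. Qed.
Lemma nat_Xlem2 p b a : (0 < p)%N -> (0 < b)%N -> ((p + 1 + b).-1 <= a)%N -> (b < a)%N.
Proof. lia. Qed.

Lemma zlem1 (V : comRingType) (a b c d : V) : a + b = (c + d) + ((a - c) + (b - d)).
Proof. ring. Qed.
Lemma zlem2 (V : comRingType) (a c : V) : - a = - c + - (a - c).
Proof. ring. Qed.

Lemma nat_Xlem3 p b : (0 < p)%N -> (0 < b)%N -> (b < ((2+p).-1 + b).-1)%N.
Proof. lia. Qed.

Section Scalar.
Variable K : fieldType.
Local Notation R := {poly K}.
Local Notation F := (rfun K).
Local Notation proper := (@Defs.proper K).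
Local Notation pi_plus := (@Defs.pi_plus K).

Lemma ratio_mul (r : {ratio R}) :
  tofr (\d_r) * (\pi_F r) = tofr (\n_r).
Proof.
rewrite /tofr.
have df := denom_ratioP r.
unlock FracField.tofrac.
have -> : forall a b : F, a * b = FracField.mul a b by [].
rewrite -FracField.pi_mul.
apply/eqmodP => /=.
rewrite FracField.equivfE /FracField.mulf /=.
rewrite !numden_Ratio ?oner_neq0 ?mulf_neq0 //.
rewrite mulr1 mul1r mulrC //.
all: exact: (oner_neq0 {poly K}).
Qed.

Lemma tofr_eq0 (p : R) : (tofr p == 0) = (p == 0).
Proof. exact: tofrac_eq0. Qed.

Lemma tofr_inj : injective (@tofr K).
Proof. by move=> p q /eqP; rewrite /tofr tofrac_eq => /eqP. Qed.

Lemma tofrD (p q : R) : tofr (p + q) = tofr p + tofr q.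
Proof. exact: tofracD. Qed.
Lemma tofrM (p q : R) : tofr (p * q) = tofr p * tofr q.
Proof. exact: tofracM. Qed.
Lemma tofrN (p : R) : tofr (- p) = - tofr p.
Proof. exact: tofracN. Qed.
Lemma tofrB (p q : R) : tofr (p - q) = tofr p - tofr q.
Proof. exact: tofracB. Qed.
Lemma tofr0 : tofr (0 : R) = 0.
Proof. exact: tofrac0. Qed.
Lemma tofr1 : tofr (1 : R) = 1.
Proof. exact: tofrac1. Qed.

Lemma frac_repr (f : F) : exists p q : R, q != 0 /\ f = tofr p / tofr q.
Proof.
exists (\n_(repr f)), (\d_(repr f)); split; first exact: denom_ratioP.
have dq : tofr (\d_(repr f)) != 0 by rewrite tofr_eq0 denom_ratioP.
by rewrite -{1}[f]reprK -(ratio_mul (repr f)) [tofr _ * _]mulrC mulfK.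
Qed.

Lemma frac_repr' (f : F) : f = tofr (\n_(repr f)) / tofr (\d_(repr f)).
Proof.
have dq : tofr (\d_(repr f)) != 0 by rewrite tofr_eq0 denom_ratioP.
by rewrite -{1}[f]reprK -(ratio_mul (repr f)) [tofr _ * _]mulrC mulfK.
Qed.

Definition sp (f : F) := proper (tofr 'X * f).

Lemma proper_frac (p q : R) : q != 0 -> (size p <= size q)%N -> proper (tofr p / tofr q).
Proof. by move=> q0 le; exists p, q. Qed.


Lemma tofr_neq0 (q : R) : q != 0 -> tofr q != 0.
Proof. by rewrite tofr_eq0. Qed.

Lemma proper0 : proper 0.
Proof. exists 0, 1; split; first exact: oner_neq0. by rewrite size_poly0 tofr0 mul0r. Qed.

Lemma proper_const (c : K) : proper (tofr c%:P).
Proof.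
exists c%:P, 1; split; first exact: oner_neq0.
by rewrite size_poly1 size_polyC_leq1 tofr1 divr1.
Qed.

Lemma proper1 : proper 1.
Proof. by have := proper_const 1; rewrite tofr1. Qed.

Lemma properD f g : proper f -> proper g -> proper (f + g).
Proof.
move=> [p1 [q1 [q10 [s1 ->]]]] [p2 [q2 [q20 [s2 ->]]]].
exists (p1 * q2 + p2 * q1), (q1 * q2); split; first by rewrite mulf_neq0.
split.
  have h1 := size_polyMleq p1 q2; have h2 := size_polyMleq p2 q1.
  have h3 := size_polyD (p1 * q2) (p2 * q1).
  rewrite (size_mul q10 q20).
  exact: (nat_addlem h3 h1 h2 s1 s2).
have t1 := tofr_neq0 q10; have t2 := tofr_neq0 q20.
rewrite tofrD !tofrM addf_div; [reflexivity|exact: t1|exact: t2].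
Qed.

Lemma properM f g : proper f -> proper g -> proper (f * g).
Proof.
move=> [p1 [q1 [q10 [s1 ->]]]] [p2 [q2 [q20 [s2 ->]]]].
exists (p1 * p2), (q1 * q2); split; first by rewrite mulf_neq0.
split.
  have h1 := size_polyMleq p1 p2.
  rewrite (size_mul q10 q20).
  exact: (nat_mullem h1 s1 s2).
have t1 := tofr_neq0 q10; have t2 := tofr_neq0 q20.
rewrite !tofrM mulf_div; reflexivity.
Qed.

Lemma properN f : proper f -> proper (- f).
Proof.
move=> h; rewrite -mulN1r; apply: properM h.
have := proper_const (-1); rewrite polyCN tofrN tofr1; exact.
Qed.

Lemma properB f g : proper f -> proper g -> proper (f - g).
Proof. by move=> hf hg; apply: properD hf (properN hg). Qed.

Lemma proper_invX : proper (tofr 'X)^-1.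
Proof.
exists 1, 'X; split; first by rewrite polyX_eq0.
split; first by rewrite size_poly1 size_polyX.
rewrite tofr1 div1r; reflexivity.
Qed.

Lemma proper_total f g : g != 0 -> proper (f / g) \/ proper (g / f).
Proof.
move=> g0.
have [->|f0] := eqVneq f 0; first by left; rewrite mul0r; exact: proper0.
move: (frac_repr f) (frac_repr g) => [p1 [q1 [q10 ef]]] [p2 [q2 [q20 eg]]].
have p10 : p1 != 0 by apply: contra f0 => /eqP p0; rewrite ef p0 tofr0 mul0r.
have p20 : p2 != 0 by apply: contra g0 => /eqP p0; rewrite eg p0 tofr0 mul0r.
have t1 := tofr_neq0 q10; have t2 := tofr_neq0 q20.
have t3 := tofr_neq0 p10; have t4 := tofr_neq0 p20.
have [le|lt] := leqP (size (p1 * q2)) (size (q1 * p2)).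
  left; exists (p1 * q2), (q1 * p2); split; first by rewrite mulf_neq0.
  split; first exact: le.
  rewrite ef eg !tofrM invf_div mulf_div; reflexivity.
right; exists (q1 * p2), (p1 * q2); split; first by rewrite mulf_neq0.
split; first exact: ltnW.
rewrite ef eg !tofrM invf_div mulf_div; congr (_ * _^-1); apply: mulrC.
Qed.

Lemma proper_trans f g h : g != 0 -> h != 0 -> proper (f / g) -> proper (g / h) -> proper (f / h).
Proof.
move=> g0 h0 a b; have := properM a b.
rewrite mulrA mulfVK; [exact|exact: g0].
Qed.

Lemma sp_proper f : sp f -> proper f.
Proof.
move=> h; have := properM h proper_invX.
have X0 : tofr (K:=K) 'X != 0 by rewrite tofr_neq0 // polyX_eq0.
rewrite mulrC mulKf; [exact|exact: X0].
Qed.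

Lemma spM f g : proper f -> sp g -> sp (f * g).
Proof. move=> hf hg; rewrite /sp mulrCA; exact: properM. Qed.

Lemma spD f g : sp f -> sp g -> sp (f + g).
Proof. move=> hf hg; rewrite /sp mulrDr; exact: properD. Qed.

Lemma spN f : sp f -> sp (- f).
Proof. move=> hf; rewrite /sp mulrN; exact: properN. Qed.

Lemma spB f g : sp f -> sp g -> sp (f - g).
Proof. move=> hf hg; exact: spD hf (spN hg). Qed.

Lemma sp0 : sp 0.
Proof. rewrite /sp mulr0; exact: proper0. Qed.

Lemma sp_invX : sp (tofr 'X)^-1.
Proof.
have X0 : tofr (K:=K) 'X != 0 by rewrite tofr_neq0 // polyX_eq0.
rewrite /sp mulfV; [exact: proper1|exact: X0].
Qed.

Lemma sp_frac (r q : R) : q != 0 -> (size r < size q)%N -> sp (tofr r / tofr q).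
Proof.
move=> q0 lt; rewrite /sp mulrA -tofrM; apply: proper_frac; first exact: q0.
have := size_polyMleq 'X r; rewrite size_polyX => h; exact: nat_Xlem h lt.
Qed.

Lemma sp_poly (p : R) : sp (tofr p) -> p = 0.
Proof.
move=> [a [b [b0 [le e]]]].
have t := tofr_neq0 b0.
have e' : tofr ('X * p * b) = tofr a.
  rewrite !tofrM e mulfVK; [reflexivity|exact: t].
move/tofr_inj: e' => e'.
apply/eqP; apply: contraTT le => p0; rewrite -ltnNge -e'.
have X0 : ('X : R) != 0 by rewrite polyX_eq0.
have hXp : 'X * p != 0 by rewrite mulf_neq0.
rewrite (size_mul hXp b0) (size_mul X0 p0) size_polyX.
apply: nat_Xlem3; by rewrite size_poly_gt0.
Qed.

Lemma pi_plus_repr (f : F) : f = tofr (pi_plus f) + (f - tofr (pi_plus f)) /\ sp (f - tofr (pi_plus f)).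
Proof.
split; first by rewrite addrC subrK; reflexivity.
set n := \n_(repr f); set d := \d_(repr f).
have d0 : d != 0 by exact: denom_ratioP.
have t := tofr_neq0 d0.
have -> : f - tofr (pi_plus f) = tofr (n %% d) / tofr d.
  rewrite /pi_plus -/n -/d {1}(frac_repr' f) -/n -/d.
  rewrite {1}(divp_eq n d) tofrD tofrM mulrDl mulfK; last exact: t.
  rewrite addrAC subrr add0r; reflexivity.
apply: sp_frac; first exact: d0. by rewrite ltn_modp.
Qed.

Lemma pi_plus_char (f : F) (P : R) g : sp g -> f = tofr P + g -> pi_plus f = P.
Proof.
move=> hg ef.
have [e1 h1] := pi_plus_repr f.
have : sp (tofr (P - pi_plus f)).
  have -> : tofr (P - pi_plus f) = (f - tofr (pi_plus f)) - g.
    rewrite ef tofrB addrAC addrK; reflexivity.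
  exact: spB.
by move/sp_poly/eqP; rewrite subr_eq0 => /eqP ->.
Qed.

Lemma pi_plus_poly (P : R) : pi_plus (tofr P) = P.
Proof. apply: (pi_plus_char sp0); rewrite addr0; reflexivity. Qed.

Lemma pi_plus_sp g : sp g -> pi_plus g = 0.
Proof. move=> h; apply: (pi_plus_char h); rewrite tofr0 add0r; reflexivity. Qed.

Lemma pi_plusD f g : pi_plus (f + g) = pi_plus f + pi_plus g.
Proof.
have [_ h1] := pi_plus_repr f; have [_ h2] := pi_plus_repr g.
apply: (pi_plus_char (spD h1 h2)); rewrite tofrD; exact: zlem1.
Qed.

Lemma pi_plusN f : pi_plus (- f) = - pi_plus f.
Proof.
have [_ h1] := pi_plus_repr f.
apply: (pi_plus_char (spN h1)); rewrite tofrN; exact: zlem2.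
Qed.

Lemma pi_plus_eq0 f : pi_plus f = 0 -> sp f.
Proof. move=> e; have [_ h] := pi_plus_repr f; rewrite e tofr0 subr0 in h; exact: h. Qed.

End Scalar.


Section Mx.
Variable K : fieldType.
Local Notation R := {poly K}.
Local Notation F := (rfun K).
Local Notation proper := (@Defs.proper K).
Local Notation pi_plus := (@Defs.pi_plus K).
Local Notation mproper := (@Defs.mproper K).
Local Notation sp := (@sp K).

HB.instance Definition _ := GRing.isZmodMorphism.Build R F (@tofr K)
  (@tofrac_is_zmod_morphism R).
HB.instance Definition _ := GRing.isMonoidMorphism.Build R F (@tofr K)
  (@tofrac_is_monoid_morphism R).

Definition msp m r (A : 'M[F]_(m, r)) := forall i j, sp (A i j).

Lemma mproper_mul m k r (A : 'M[F]_(m, k)) (B : 'M[F]_(k, r)) :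
  mproper A -> mproper B -> mproper (A *m B).
Proof.
move=> hA hB i j; rewrite mxE.
apply: (big_ind (fun x => proper x)); [exact: proper0 | exact: properD |].
move=> l _; exact: properM.
Qed.

Lemma msp_mull m k r (A : 'M[F]_(m, k)) (B : 'M[F]_(k, r)) :
  mproper A -> msp B -> msp (A *m B).
Proof.
move=> hA hB i j; rewrite mxE.
apply: (big_ind (fun x => sp x)); [exact: sp0 | exact: spD |].
move=> l _; exact: spM.
Qed.

Lemma msp_mulr m k r (A : 'M[F]_(m, k)) (B : 'M[F]_(k, r)) :
  msp A -> mproper B -> msp (A *m B).
Proof.
move=> hA hB i j; rewrite mxE.
apply: (big_ind (fun x => sp x)); [exact: sp0 | exact: spD |].
move=> l _; rewrite mulrC; exact: spM.
Qed.

Lemma mproperD m r (A B : 'M[F]_(m, r)) : mproper A -> mproper B -> mproper (A + B).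
Proof. move=> hA hB i j; rewrite mxE; exact: properD. Qed.
Lemma mproperN m r (A : 'M[F]_(m, r)) : mproper A -> mproper (- A).
Proof. move=> hA i j; rewrite mxE; exact: properN. Qed.
Lemma mproperZ m r q (A : 'M[F]_(m, r)) : proper q -> mproper A -> mproper (q *: A).
Proof. move=> hq hA i j; rewrite mxE; exact: properM. Qed.
Lemma mproper0 m r : mproper (0 : 'M[F]_(m, r)).
Proof. move=> i j; rewrite mxE; exact: proper0. Qed.
Lemma mproper1 m : mproper (1%:M : 'M[F]_m).
Proof. move=> i j; rewrite mxE; case: (i == j); [exact: proper1 | exact: proper0]. Qed.

Lemma mspD m r (A B : 'M[F]_(m, r)) : msp A -> msp B -> msp (A + B).
Proof. move=> hA hB i j; rewrite mxE; exact: spD. Qed.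
Lemma mspN m r (A : 'M[F]_(m, r)) : msp A -> msp (- A).
Proof. move=> hA i j; rewrite mxE; exact: spN. Qed.
Lemma mspB m r (A B : 'M[F]_(m, r)) : msp A -> msp B -> msp (A - B).
Proof. move=> hA hB; exact: mspD hA (mspN hB). Qed.
Lemma mspZ m r q (A : 'M[F]_(m, r)) : proper q -> msp A -> msp (q *: A).
Proof. move=> hq hA i j; rewrite mxE; exact: spM. Qed.
Lemma msp_proper m r (A : 'M[F]_(m, r)) : msp A -> mproper A.
Proof. move=> hA i j; exact: sp_proper. Qed.

Lemma mx_pi_plusD m r (A B : 'M[F]_(m, r)) :
  mx_pi_plus (A + B) = mx_pi_plus A + mx_pi_plus B.
Proof. apply/matrixP=> i j; rewrite !mxE; exact: pi_plusD. Qed.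
Lemma mx_pi_plusN m r (A : 'M[F]_(m, r)) :
  mx_pi_plus (- A) = - mx_pi_plus A.
Proof. apply/matrixP=> i j; rewrite !mxE; exact: pi_plusN. Qed.
Lemma mx_pi_plus_sp m r (A : 'M[F]_(m, r)) : msp A -> mx_pi_plus A = 0.
Proof. move=> h; apply/matrixP=> i j; rewrite !mxE; exact: pi_plus_sp. Qed.
Lemma mx_pi_plus_eq0 m r (A : 'M[F]_(m, r)) : mx_pi_plus A = 0 -> msp A.
Proof.
move=> h i j; apply: pi_plus_eq0.
by move/matrixP: h => /(_ i j); rewrite !mxE.
Qed.
Lemma mx_pi_plus_repr m r (A : 'M[F]_(m, r)) : msp (A - mx_tofr (mx_pi_plus A)).
Proof.
move=> i j; rewrite !mxE; have [_ h] := pi_plus_repr (A i j); exact: h.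
Qed.

Lemma mx_tofrM m k r (A : 'M[R]_(m, k)) (B : 'M[R]_(k, r)) :
  mx_tofr (A *m B) = mx_tofr A *m mx_tofr B.
Proof. exact: map_mxM. Qed.
Lemma mx_tofrD m r (A B : 'M[R]_(m, r)) :
  mx_tofr (A + B) = mx_tofr A + mx_tofr B.
Proof. exact: map_mxD. Qed.
Lemma mx_tofr_inj m r : injective (@mx_tofr K m r).
Proof.
move=> A B eq_AB; apply/matrixP=> i j.
move/matrixP/(_ i j): eq_AB; rewrite !mxE; exact: tofr_inj.
Qed.

Lemma mx_pi_plus_tofr m r (P : 'M[R]_(m, r)) : mx_pi_plus (mx_tofr P) = P.
Proof. apply/matrixP=> i j; rewrite !mxE; exact: pi_plus_poly. Qed.

End Mx.


Section Rho.
Variable K : fieldType.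
Local Notation R := {poly K}.
Local Notation F := (rfun K).
Local Notation proper := (@Defs.proper K).
Local Notation pi_plus := (@Defs.pi_plus K).
Local Notation mproper := (@Defs.mproper K).
Local Notation sp := (@sp K).
Local Notation msp := (@msp K).

Lemma Lunit n (L : 'M[R]_n) : nonsingular L -> mx_tofr L \in unitmx.
Proof.
move=> h; rewrite unitmxE /mx_tofr det_map_mx unitfE.
by rewrite (tofr_eq0 (\det L)).
Qed.

Lemma LiLf n (L : 'M[R]_n) : nonsingular L -> invmx (mx_tofr L) *m mx_tofr L = 1%:M.
Proof. move=> h; exact: mulVmx (Lunit h). Qed.
Lemma LfLi n (L : 'M[R]_n) : nonsingular L -> mx_tofr L *m invmx (mx_tofr L) = 1%:M.
Proof. move=> h; exact: mulmxV (Lunit h). Qed.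

Lemma rho_eD n (L : 'M[R]_n) (w1 w2 : 'cV[F]_n) :
  rho_e L (w1 + w2) = rho_e L w1 + rho_e L w2.
Proof. by rewrite /rho_e mulmxDr mx_pi_plusD mulmxDr. Qed.
Lemma rho_eN n (L : 'M[R]_n) (w : 'cV[F]_n) : rho_e L (- w) = - rho_e L w.
Proof. by rewrite /rho_e mulmxN mx_pi_plusN mulmxN. Qed.
Lemma rho_eB n (L : 'M[R]_n) (w1 w2 : 'cV[F]_n) :
  rho_e L (w1 - w2) = rho_e L w1 - rho_e L w2.
Proof. by rewrite rho_eD rho_eN. Qed.

Lemma rho_e_eq0 n (L : 'M[R]_n) (w : 'cV[F]_n) : nonsingular L ->
  rho_e L w = 0 -> msp (invmx (mx_tofr L) *m w).
Proof.
move=> hL e; apply: mx_pi_plus_eq0.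
set P := mx_pi_plus _.
apply: (@mx_tofr_inj K).
have e0 : L *m P = 0 by exact: e.
have : mx_tofr (L *m P) = 0 by rewrite e0 /mx_tofr map_mx0.
rewrite mx_tofrM => e2.
rewrite -[mx_tofr P]mul1mx -(LiLf hL) -mulmxA e2 mulmx0 /mx_tofr map_mx0.
reflexivity.
Qed.

Lemma rho_e_sp n (L : 'M[R]_n) (w : 'cV[F]_n) :
  msp (invmx (mx_tofr L) *m w) -> rho_e L w = 0.
Proof. by move=> h; rewrite /rho_e mx_pi_plus_sp // mulmx0. Qed.

Lemma part2 n n1 (L : 'M[R]_n) (L1 : 'M[R]_n1) (Th Th1 : 'M[F]_(n1, n))
  (x : 'cV[F]_n) : nonsingular L -> nonsingular L1 -> mproper Th1 ->
  Th *m mx_tofr L = mx_tofr L1 *m Th1 ->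
  rho_e L1 (Th *m mx_tofr (rho L x)) = rho L1 (Th *m x).
Proof.
move=> hL hL1 hTh1 e.
rewrite /rho /rho_e mx_tofrM.
set Li := invmx (mx_tofr L); set L1i := invmx (mx_tofr L1).
set P := mx_pi_plus (Li *m x).
have e1 : L1i *m (Th *m (mx_tofr L *m mx_tofr P)) = Th1 *m mx_tofr P.
  by rewrite !mulmxA -(mulmxA L1i) e mulmxA (LiLf hL1) mul1mx.
have e2 : L1i *m (Th *m x) = Th1 *m (Li *m x).
  rewrite -{1}[x]mul1mx -(LfLi hL) -/Li.
  by rewrite !mulmxA -(mulmxA L1i) e mulmxA (LiLf hL1) mul1mx.
rewrite e1 e2; congr (_ *m _).
have hs := mx_pi_plus_repr (Li *m x).
rewrite -/P in hs.
have -> : Th1 *m (Li *m x) = Th1 *m mx_tofr P + Th1 *m (Li *m x - mx_tofr P).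
  by rewrite -mulmxDr addrC subrK.
rewrite mx_pi_plusD (mx_pi_plus_sp (msp_mull hTh1 hs)) addr0.
reflexivity.
Qed.

End Rho.


From mathcomp Require Import all_fingroup.

Section Smith.
Variable K : fieldType.
Local Notation R := {poly K}.
Local Notation F := (rfun K).
Local Notation proper := (@Defs.proper K).
Local Notation mproper := (@Defs.mproper K).

Definition GLp n (B : 'M[F]_n) := exists Bi, mproper B /\ mproper Bi /\
  B *m Bi = 1%:M /\ Bi *m B = 1%:M.

Lemma GLp1 n : GLp (1%:M : 'M[F]_n).
Proof.
exists 1%:M; split; first exact: mproper1.
split; first exact: mproper1.
by split; rewrite mulmx1.
Qed.

Lemma GLp_mul n (A B : 'M[F]_n) : GLp A -> GLp B -> GLp (A *m B).
Proof.
move=> [Ai [hA [hAi [e1 e2]]]] [Bi [hB [hBi [e3 e4]]]].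
exists (Bi *m Ai); split; first exact: mproper_mul.
split; first exact: mproper_mul.
split.
  by rewrite mulmxA -(mulmxA A) e3 mulmx1 e1.
by rewrite mulmxA -(mulmxA Bi) e2 mulmx1 e4.
Qed.

Lemma mproper_perm n (s : 'S_n) : mproper (perm_mx s : 'M[F]_n).
Proof.
move=> i j; rewrite /perm_mx /row_perm !mxE.
case: eqP => _; [rewrite mulr1n; exact: proper1 | rewrite mulr0n; exact: proper0].
Qed.

Lemma GLp_tperm n (i j : 'I_n) : GLp (tperm_mx i j : 'M[F]_n).
Proof.
exists (tperm_mx i j); split; first exact: mproper_perm.
split; first exact: mproper_perm.
by split; rewrite /tperm_mx -perm_mxM tperm2 perm_mx1.
Qed.

Lemma mproper_block m1 m2 n1 n2 (A : 'M[F]_(m1, n1)) (B : 'M[F]_(m1, n2))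
  (C : 'M[F]_(m2, n1)) (D : 'M[F]_(m2, n2)) :
  mproper A -> mproper B -> mproper C -> mproper D -> mproper (block_mx A B C D).
Proof.
move=> hA hB hC hD i j.
rewrite -(splitK i) -(splitK j).
case: (split i) => k; case: (split j) => l /=.
- rewrite block_mxEul; exact: hA.
- rewrite block_mxEur; exact: hB.
- rewrite block_mxEdl; exact: hC.
- rewrite block_mxEdr; exact: hD.
Qed.

Lemma GLp_dblock n (B : 'M[F]_n) : GLp B -> GLp (block_mx (1%:M : 'M_1) 0 0 B).
Proof.
move=> [Bi [hB [hBi [e1 e2]]]].
exists (block_mx 1%:M 0 0 Bi); split.
  apply: mproper_block => //; [exact: mproper1|exact: mproper0|exact: mproper0].
split.
  apply: mproper_block => //; [exact: mproper1|exact: mproper0|exact: mproper0].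
split; rewrite mulmx_block !mulmx0 !mul0mx !addr0 !add0r mul1mx ?e1 ?e2;
  by rewrite -scalar_mx_block.
Qed.

Lemma GLp_lblock n (X : 'M[F]_(n, 1)) : mproper X ->
  GLp (block_mx (1%:M : 'M_1) 0 X 1%:M).
Proof.
move=> hX; exists (block_mx 1%:M 0 (- X) 1%:M); split.
  apply: mproper_block => //; [exact: mproper1|exact: mproper0|exact: mproper1].
split.
  apply: mproper_block; [exact: mproper1|exact: mproper0|exact: mproperN|exact: mproper1].
split; rewrite mulmx_block !mulmx0 !mul0mx !addr0 !mulmx1 !mul1mx ?addrN ?addNr ?add0r;
  by rewrite -scalar_mx_block.
Qed.

Lemma GLp_ublock n (Y : 'M[F]_(1, n)) : mproper Y ->
  GLp (block_mx (1%:M : 'M_1) Y 0 1%:M).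
Proof.
move=> hY; exists (block_mx 1%:M (- Y) 0 1%:M); split.
  apply: mproper_block => //; [exact: mproper1|exact: mproper0|exact: mproper1].
split.
  apply: mproper_block; [exact: mproper1|exact: mproperN|exact: mproper0|exact: mproper1].
split; rewrite mulmx_block !mulmx0 !mul0mx !addr0 !mulmx1 !mul1mx ?addrN ?addNr ?add0r;
  by rewrite -scalar_mx_block.
Qed.

Lemma pivot_seq (s : seq F) : has (fun x => x != 0) s ->
  exists2 g, g \in s & g != 0 /\ forall x, x \in s -> proper (x / g).
Proof.
elim: s => [//|y s IH] /=.
have [hs|hs] := boolP (has (fun x => x != 0) s).
  move=> _; have [g gs [g0 gm]] := IH hs.
  have [y0|y0] := eqVneq y 0.
    exists g; first by rewrite in_cons gs orbT.
    split; first exact: g0.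
    move=> x; rewrite in_cons => /orP [/eqP ->|xs]; last exact: gm.
    rewrite y0 mul0r; exact: proper0.
  have [yg|gy] := proper_total y g0.
    exists g; first by rewrite in_cons gs orbT.
    split; first exact: g0.
    by move=> x; rewrite in_cons => /orP [/eqP ->|xs]; [exact: yg|exact: gm].
  exists y; first by rewrite in_cons eqxx.
  split; first exact: y0.
  move=> x; rewrite in_cons => /orP [/eqP ->|xs].
    rewrite mulfV; [exact: proper1 | exact: y0].
  exact: (proper_trans g0 y0 (gm x xs) gy).
rewrite orbF => y0.
exists y; first by rewrite in_cons eqxx.
split; first exact: y0.
move=> x; rewrite in_cons => /orP [/eqP ->|xs].
  rewrite mulfV; [exact: proper1 | exact: y0].
have /eqP -> : x == 0.
  apply: contraNT hs => x0; apply/hasP; exists x; [exact: xs | exact: x0].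
rewrite mul0r; exact: proper0.
Qed.


Lemma ul11 n (A : 'M[F]_(1 + n)) : ulsubmx A = (A 0 0)%:M.
Proof.
rewrite [ulsubmx A]mx11_scalar; congr (_%:M).
rewrite /ulsubmx !mxE; congr (A _ _); by apply/val_inj.
Qed.
Lemma dl_entry n (A : 'M[F]_(1 + n)) k l : dlsubmx A k l = A (rshift 1 k) (lshift n l).
Proof. by rewrite /dlsubmx !mxE. Qed.
Lemma ur_entry n (A : 'M[F]_(1 + n)) k l : ursubmx A k l = A (lshift n k) (rshift 1 l).
Proof. by rewrite /ursubmx !mxE. Qed.

Lemma smith n (M : 'M[F]_n) :
  exists B C, GLp B /\ GLp C /\ is_diag_mx (B *m M *m C).
Proof.
elim: n M => [|n IH] M.
  exists 1%:M, 1%:M; split; first exact: GLp1. split; first exact: GLp1.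
  by apply/is_diag_mxP => [[]].
pose s := map (fun ij : 'I_n.+1 * 'I_n.+1 => M ij.1 ij.2)
              (enum (@predT ('I_n.+1 * 'I_n.+1)%type)).
have [hs|hs] := boolP (has (fun x => x != 0) s); last first.
  have M0 : M = 0.
    apply/matrixP => i j; rewrite [RHS]mxE.
    apply/eqP; apply: contraNT hs => nz; apply/hasP; exists (M i j); last exact: nz.
    apply/mapP; exists (i, j); [by rewrite mem_enum | reflexivity].
  exists 1%:M, 1%:M; split; first exact: GLp1. split; first exact: GLp1.
  rewrite M0 mulmx0 mul0mx; exact: mx0_is_diag.
have [g gs [g0 gmax]] := pivot_seq hs.
have [[i0 j0] _ eg] := mapP gs.
simpl in eg.
have piv : forall k l, proper (M k l / M i0 j0).
  move=> k l; rewrite -eg; apply: gmax; apply/mapP; exists (k, l); [by rewrite mem_enum | reflexivity].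
have p0 : M i0 j0 != 0 by rewrite -eg.
pose M1 : 'M[F]_(1 + n) := tperm_mx 0 i0 *m M *m tperm_mx j0 0.
have eM1 : forall k l, M1 k l = M (tperm 0 i0 k) (tperm j0 0 l).
  move=> k l; rewrite /M1 -xrowE -xcolE /xcol /xrow /col_perm /row_perm !mxE.
  reflexivity.
pose p := M1 0 0.
have ep : p = M i0 j0 by rewrite /p eM1 tpermL tpermR.
have pp0 : p != 0 by rewrite ep.
have piv1 : forall k l, proper (p^-1 * M1 k l).
  move=> k l; rewrite ep eM1 mulrC; exact: piv.
pose u := ursubmx M1; pose c := dlsubmx M1; pose D := drsubmx M1.
have hul : ulsubmx M1 = p%:M.
  rewrite /p; exact: ul11.
have hc : mproper (- (p^-1 *: c)).
  apply: mproperN => k l; rewrite mxE dl_entry; exact: piv1.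
have hu : mproper (- (p^-1 *: u)).
  apply: mproperN => k l; rewrite mxE ur_entry; exact: piv1.
pose E : 'M[F]_(1 + n) := block_mx 1%:M 0 (- (p^-1 *: c)) 1%:M.
pose Fm : 'M[F]_(1 + n) := block_mx 1%:M (- (p^-1 *: u)) 0 1%:M.
pose S := D - p^-1 *: (c *m u).
have key1 : E *m M1 = block_mx p%:M u 0 S.
  rewrite -[M1 in E *m M1]submxK hul /E mulmx_block ?mul0mx ?mul1mx ?addr0 ?add0r.
  rewrite -/u -/c -/D.
  have e3 : - (p^-1 *: c) *m p%:M + c = 0.
    rewrite mulNmx -scalemxAl mul_mx_scalar scalerA mulVf; last exact: pp0.
    by rewrite scale1r addNr.
  have e4 : - (p^-1 *: c) *m u + D = S.
    by rewrite /S mulNmx -scalemxAl addrC.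
  by rewrite e3 e4.
have key : E *m M1 *m Fm = block_mx p%:M 0 0 S.
  rewrite key1 /Fm mulmx_block ?mul0mx ?mulmx0 ?mulmx1 ?addr0 ?add0r.
  have e2 : p%:M *m - (p^-1 *: u) + u = 0.
    rewrite mulmxN mul_scalar_mx scalerA mulfV; last exact: pp0.
    by rewrite scale1r addNr.
  by rewrite e2.
have [B' [C' [hB' [hC' hd']]]] := IH S.
exists (block_mx (1%:M : 'M_1) 0 0 B' *m E *m (tperm_mx 0 i0 : 'M_(1 + n))).
exists ((tperm_mx j0 0 : 'M_(1 + n)) *m Fm *m block_mx (1%:M : 'M_1) 0 0 C').
split.
  apply: GLp_mul; last exact: GLp_tperm.
  apply: GLp_mul; first exact: GLp_dblock.
  rewrite /E; exact: GLp_lblock hc.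
split.
  apply: GLp_mul; last exact: GLp_dblock.
  apply: GLp_mul; first exact: GLp_tperm.
  rewrite /Fm; exact: GLp_ublock hu.
have -> : block_mx (1%:M : 'M_1) 0 0 B' *m E *m (tperm_mx 0 i0 : 'M_(1 + n)) *m M
   *m ((tperm_mx j0 0 : 'M_(1 + n)) *m Fm *m block_mx (1%:M : 'M_1) 0 0 C')
   = block_mx (1%:M : 'M_1) 0 0 B' *m (E *m M1 *m Fm) *m block_mx (1%:M : 'M_1) 0 0 C'.
  by rewrite /M1 !mulmxA.
rewrite key !mulmx_block !mul0mx !mulmx0 !mul1mx !mulmx1 !addr0 !add0r.
rewrite mul0mx.
have h := @is_diag_block_mx F 1 n 1 n (p%:M) 0 0 (B' *m S *m C') erefl.
rewrite !eqxx mx11_is_diag hd' in h.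
exact: (elimT idP h).
Qed.

End Smith.


Section Main.
Variable K : fieldType.
Local Notation R := {poly K}.
Local Notation F := (rfun K).
Local Notation proper := (@Defs.proper K).
Local Notation mproper := (@Defs.mproper K).
Local Notation vproper := (@Defs.vproper K).
Local Notation sp := (@sp K).
Local Notation msp := (@msp K).

Lemma vproperP n (x : 'cV[F]_n) : vproper x <-> mproper x.
Proof. split=> h i; [move=> j; rewrite (ord1 j); exact: h | exact: h i 0]. Qed.

Lemma vproper0 n : vproper (0 : 'cV[F]_n).
Proof. apply/vproperP; exact: mproper0. Qed.
Lemma vproperD n (x y : 'cV[F]_n) : vproper x -> vproper y -> vproper (x + y).
Proof. move=> /vproperP hx /vproperP hy; apply/vproperP; exact: mproperD. Qed.
Lemma vproperZ n q (x : 'cV[F]_n) : proper q -> vproper x -> vproper (q *: x).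
Proof. move=> hq /vproperP hx; apply/vproperP; exact: mproperZ. Qed.
Lemma vproper_mul m n (A : 'M[F]_(m, n)) (x : 'cV[F]_n) : mproper A -> vproper x -> vproper (A *m x).
Proof. move=> hA /vproperP hx; apply/vproperP; exact: mproper_mul. Qed.
Lemma mproper_delta m n (i : 'I_m) (j : 'I_n) : mproper (delta_mx i j : 'M[F]_(m, n)).
Proof.
move=> k l; rewrite mxE.
case: ((k == i) && (l == j)); [rewrite mulr1n; exact: proper1 | rewrite mulr0n; exact: proper0].
Qed.
Lemma vproper_delta n (i : 'I_n) : vproper (delta_mx i 0 : 'cV[F]_n).
Proof. apply/vproperP; exact: mproper_delta. Qed.

Lemma mproper_diag n (d : 'rV[F]_n) : (forall i, proper (d 0 i)) -> mproper (diag_mx d).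
Proof.
move=> hd i j; rewrite mxE.
case: (i == j); [rewrite mulr1n; exact: hd | rewrite mulr0n; exact: proper0].
Qed.

Lemma msp_scale_sp n m q (v : 'M[F]_(n, m)) : sp q -> mproper v -> msp (q *: v).
Proof. move=> hq hv i j; rewrite mxE mulrC; exact: spM. Qed.

Lemma rho_e0 n (L : 'M[R]_n) : rho_e L 0 = 0.
Proof.
rewrite /rho_e mulmx0 mx_pi_plus_sp ?mulmx0 //.
move=> i j; rewrite mxE; exact: sp0.
Qed.

Lemma rho_e_sum n (L : 'M[R]_n) I (r : seq I) (f : I -> 'cV[F]_n) :
  rho_e L (\sum_(i <- r) f i) = \sum_(i <- r) rho_e L (f i).
Proof. exact: (big_morph _ (@rho_eD K n L) (rho_e0 L)). Qed.

Lemma ent_delta m n (A : 'M[F]_(m, n)) k i : A k i = (A *m delta_mx i (0 : 'I_1)) k 0.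
Proof. by rewrite -colE mxE. Qed.


Lemma scalemx_entry m r (c : F) (A : 'M[F]_(m, r)) i j : (c *: A) i j = c * A i j.
Proof. by rewrite mxE. Qed.

Lemma mul_mx_diag_entry m r (A : 'M[F]_(m, r)) (d : 'rV[F]_r) k i :
  (A *m diag_mx d) k i = A k i * d 0 i.
Proof. by rewrite mul_mx_diag mxE. Qed.

Lemma row_entry r (f : 'I_r -> F) i : (\row_j f j) 0 i = f i.
Proof. by rewrite mxE. Qed.

Lemma rhoeq_scale n1 (L1 : 'M[R]_n1) (y z : 'cV[F]_n1) q : nonsingular L1 ->
  rho_e L1 y = rho_e L1 z -> proper q -> rho_e L1 (q *: y) = rho_e L1 (q *: z).
Proof.
move=> h e hq; apply/eqP; rewrite -subr_eq0 -rho_eB -scalerBr; apply/eqP.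
apply: rho_e_sp; rewrite -scalemxAr. apply: (@mspZ K _ _ q _ hq).
apply: rho_e_eq0 h _; rewrite rho_eB e subrr; reflexivity.
Qed.

Lemma forward n n1 (L : 'M[R]_n) (L1 : 'M[R]_n1)
  (phi : 'cV[{poly K}]_n -> 'cV[{poly K}]_n1) :
  nonsingular L -> nonsingular L1 ->
  (forall xb, UL L xb -> UL L1 (phi xb)) -> Kinf_hom L L1 phi ->
  exists Theta Theta1 : 'M[F]_(n1, n),
    mproper Theta /\ mproper Theta1 /\
    Theta *m mx_tofr L = mx_tofr L1 *m Theta1 /\
    (forall xb, UL L xb -> phi xb = rho_e L1 (Theta *m mx_tofr xb)).
Proof.
move=> hL hL1 hU [hadd hsc].
set Lf := mx_tofr L; set L1f := mx_tofr L1.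
set Li := invmx Lf; set L1i := invmx L1f.
have rho0 : rho L 0 = 0 := rho_e0 L.
have phi0 : phi 0 = 0.
  have h := hadd 0 0 (@vproper0 n) (@vproper0 n).
  rewrite rho0 addr0 in h.
  move: h; rewrite -{1}[phi 0]addr0 => /addrI e; by rewrite -e.
have he : forall i : 'I_n, exists y : 'cV[F]_n1,
    vproper y /\ phi (rho L (delta_mx i 0)) = rho L1 y.
  move=> i; have [y [hy ey]] := hU _ (ex_intro _ (delta_mx i 0) (conj (vproper_delta i) erefl)).
  by exists y.
have [th hth] := fin_all_exists he.
pose Th0 : 'M[F]_(n1, n) := \matrix_(k, i) th i k 0.
have Th0p : mproper Th0.
  move=> k i; rewrite mxE; have [h _] := hth i; exact: h k.
have Th0e : forall i, Th0 *m delta_mx i 0 = th i.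
  move=> i; rewrite -colE; apply/matrixP=> k j; rewrite (ord1 j) !mxE; reflexivity.
have hlin : forall x : 'cV[F]_n, vproper x -> phi (rho L x) = rho L1 (Th0 *m x).
  move=> x hx.
  have ex : x = \sum_(i < n) x i 0 *: delta_mx i 0.
    rewrite {1}[x]matrix_sum_delta; apply: eq_bigr => i _; rewrite big_ord1; reflexivity.
  have key : forall r : seq 'I_n, vproper (\sum_(i <- r) x i 0 *: delta_mx i 0) /\
      phi (rho L (\sum_(i <- r) x i 0 *: delta_mx i 0)) = \sum_(i <- r) rho L1 (x i 0 *: th i).
    elim=> [|i r [IHp IHe]].
      rewrite !big_nil; split; first exact: vproper0.
      rewrite rho0; exact: phi0.
    rewrite !big_cons.
    set a := x i 0 *: delta_mx i 0; set b := \sum_(j <- r) _.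
    have ha : vproper a := vproperZ (hx i) (vproper_delta i).
    split; first exact: vproperD ha IHp.
    have -> : rho L (a + b) = rho L a + rho L b by exact: rho_eD.
    rewrite hadd; [|exact: ha|exact: IHp].
    rewrite IHe; congr (_ + _).
    have [hthp hthe] := hth i.
    exact: hsc (hx i) (vproper_delta i) hthp hthe.
  rewrite ex (proj2 (key _)).
  rewrite /rho mulmx_sumr rho_e_sum; apply: eq_bigr => i _.
  by rewrite -scalemxAr Th0e.
have hker : forall x, vproper x -> msp (Li *m x) -> msp (L1i *m (Th0 *m x)).
  move=> x hx hs; apply: rho_e_eq0 hL1 _.
  have := hlin x hx; rewrite /rho (rho_e_sp hs) phi0 => e; by rewrite -e.
have [B [C [[Bi [hB [hBi [eBBi eBiB]]]] [[Ci [hC [hCi [eCCi eCiC]]]] hD]]]] := smith Lf.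
have /diag_mxP [d eD] := hD.
pose a (i : 'I_n) := d 0 i.
have eLf : Lf = Bi *m diag_mx d *m Ci.
  by rewrite -eD !mulmxA eBiB mul1mx -mulmxA eCCi mulmx1.
have eBLf : B *m Lf = diag_mx d *m Ci.
  by rewrite {1}eLf !mulmxA eBBi mul1mx.
pose bcol (i : 'I_n) : 'cV[F]_n := Bi *m delta_mx i 0.
pose ccol (i : 'I_n) : 'cV[F]_n := C *m delta_mx i 0.
have hbcol : forall i, vproper (bcol i).
  move=> i; apply: vproper_mul hBi (vproper_delta i).
have hccol : forall i, mproper (ccol i).
  move=> i; apply/vproperP; apply: vproper_mul hC (vproper_delta i).
have Dcol : forall i, diag_mx d *m (delta_mx i 0 : 'cV[F]_n) = a i *: delta_mx i 0.
  move=> i; rewrite mul_diag_mx; apply/matrixP=> k j; rewrite !mxE.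
  have [->|ne] := eqVneq k i; first reflexivity.
  by rewrite andFb mulr0n !mulr0.
have LfC : forall i, Lf *m ccol i = a i *: bcol i.
  move=> i; rewrite eLf /ccol -!mulmxA (mulmxA Ci) eCiC mul1mx Dcol -scalemxAr.
  reflexivity.
have a0 : forall i, a i != 0.
  move=> i; apply/eqP => ai0.
  have h := LfC i; rewrite ai0 scale0r in h.
  have cc0 : ccol i = 0.
    rewrite -[ccol i]mul1mx -(LiLf hL) -mulmxA.
    have -> : mx_tofr L *m ccol i = 0 by exact: h.
    by rewrite mulmx0.
  have : (delta_mx i 0 : 'cV[F]_n) = 0.
    rewrite -[delta_mx i 0]mul1mx -eCiC -mulmxA.
    have -> : C *m (delta_mx i 0 : 'cV[F]_n) = 0 by exact: cc0.
    by rewrite mulmx0.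
  move/matrixP/(_ i 0); rewrite !mxE !eqxx /= mulr1n => /eqP.
  by rewrite oner_eq0.
have Lib : forall i, Li *m bcol i = (a i)^-1 *: ccol i.
  move=> i; rewrite -[bcol i](scalerK (a0 i)) -LfC -scalemxAr mulmxA (LiLf hL) mul1mx.
  reflexivity.
pose del (i : 'I_n) : bool :=
  if excluded_middle_informative (sp (a i)^-1) then false else true.
have X0 : tofr (K:=K) 'X != 0 by rewrite tofr_eq0 polyX_eq0.
have caseA : forall i, ~~ del i -> msp (L1i *m (Th0 *m bcol i)).
  move=> i; rewrite /del; case: (excluded_middle_informative _) => [hs _|//].
  apply: hker; first exact: hbcol.
  rewrite Lib; exact: msp_scale_sp hs (hccol i).
have caseB : forall i, del i -> mproper (a i *: (L1i *m (Th0 *m bcol i))).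
  move=> i; rewrite /del; case: (excluded_middle_informative _) => [//|hns _].
  have hp : proper (a i / tofr 'X).
    have [h|h] := proper_total (tofr 'X)^-1 (invr_neq0 (a0 i)).
      rewrite invrK mulrC in h; exact: h.
    exfalso; apply: hns; rewrite /sp mulrC; rewrite invrK in h; exact: h.
  have hx : msp (L1i *m (Th0 *m ((a i / tofr 'X) *: bcol i))).
    apply: hker; first exact: vproperZ hp (hbcol i).
    rewrite -scalemxAr Lib scalerA.
    have -> : a i / tofr 'X * (a i)^-1 = (tofr 'X)^-1.
      rewrite mulrAC mulfV; [exact: mul1r | exact: a0].
    exact: (msp_scale_sp (@sp_invX K) (hccol i)).
  move=> k j; have := hx k j; rewrite -!scalemxAr !scalemx_entry /sp => h.
  have -> : a i * (L1i *m (Th0 *m bcol i)) k j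
      = tofr 'X * (a i / tofr 'X * (L1i *m (Th0 *m bcol i)) k j).
    rewrite mulrA mulrCA mulfV; [by rewrite mulr1 | exact: X0].
  exact: h.
pose Dl : 'M[F]_n := diag_mx (\row_i ((del i)%:R : F)).
pose Dc : 'M[F]_n := diag_mx (\row_i ((~~ del i)%:R : F)).
have hDl : mproper Dl.
  apply: mproper_diag => i; rewrite row_entry.
  case: (del i); [rewrite mulr1n; exact: proper1 | rewrite mulr0n; exact: proper0].
have hDD : Dl + Dc = 1%:M.
  apply/matrixP=> i j; rewrite !mxE.
  case: (del i); case: (i == j); rewrite /= ?mulr1n ?mulr0n ?addr0 ?add0r; reflexivity.
pose Th := Th0 *m Bi *m Dl *m B.
pose Th1 := L1i *m Th *m Lf.
pose N := L1i *m Th0 *m Bi.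
have Nent : forall k i, N k i = (L1i *m (Th0 *m bcol i)) k 0.
  move=> k i; rewrite [N k i]ent_delta /N /bcol !mulmxA; reflexivity.
have hTh : mproper Th.
  apply: mproper_mul hB; apply: mproper_mul hDl; exact: mproper_mul Th0p hBi.
have hTh1 : mproper Th1.
  have -> : Th1 = N *m Dl *m diag_mx d *m Ci.
    rewrite /Th1 /Th /N !mulmxA -(mulmxA _ B Lf) eBLf !mulmxA; reflexivity.
  apply: mproper_mul hCi.
  move=> k i; rewrite !mul_mx_diag_entry row_entry Nent.
  case hdi: (del i).
    rewrite mulr1n mulr1 mulrC.
    have := caseB i hdi k 0; rewrite scalemx_entry; exact.
  rewrite mulr0n mulr0 mul0r; exact: proper0.
have hThL : Th *m Lf = L1f *m Th1.
  rewrite /Th1 !mulmxA (LfLi hL1) mul1mx; reflexivity.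
exists Th, Th1; split; first exact: hTh.
split; first exact: hTh1.
split; first exact: hThL.
move=> xb [x [hx ->]].
rewrite (part2 x hL hL1 hTh1 hThL) hlin; last exact: hx.
have eTh0 : Th0 = Th + Th0 *m Bi *m Dc *m B.
  rewrite /Th -mulmxDl -mulmxDr hDD mulmx1 -mulmxA eBiB mulmx1; reflexivity.
rewrite {1}eTh0 mulmxDl /rho rho_eD.
have -> : rho_e L1 (Th0 *m Bi *m Dc *m B *m x) = 0.
  apply: rho_e_sp.
  have -> : invmx (mx_tofr L1) *m (Th0 *m Bi *m Dc *m B *m x) = (N *m Dc) *m (B *m x).
    rewrite /N !mulmxA; reflexivity.
  apply: msp_mulr; last by apply/vproperP; exact: vproper_mul hB hx.
  move=> k i; rewrite mul_mx_diag_entry row_entry Nent.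
  case hdi: (del i) => /=.
    rewrite mulr0n mulr0; exact: sp0.
  rewrite mulr1n mulr1; apply: (caseA i); by rewrite hdi.
by rewrite addr0.
Qed.


Lemma backward n n1 (L : 'M[R]_n) (L1 : 'M[R]_n1)
  (phi : 'cV[{poly K}]_n -> 'cV[{poly K}]_n1) :
  nonsingular L -> nonsingular L1 ->
  (exists Theta Theta1 : 'M[F]_(n1, n),
    mproper Theta /\ mproper Theta1 /\
    Theta *m mx_tofr L = mx_tofr L1 *m Theta1 /\
    (forall xb, UL L xb -> phi xb = rho_e L1 (Theta *m mx_tofr xb))) ->
  Kinf_hom L L1 phi.
Proof.
move=> hL hL1 [Th [Th1 [hTh [hTh1 [e hphi]]]]].
have hl : forall x, vproper x -> phi (rho L x) = rho L1 (Th *m x).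
  move=> x hx; rewrite hphi; first exact: part2 x hL hL1 hTh1 e.
  by exists x; split.
split.
  move=> x y hx hy.
  have -> : rho L x + rho L y = rho L (x + y) by rewrite /rho rho_eD.
  rewrite (hl _ (vproperD hx hy)) (hl _ hx) (hl _ hy) /rho mulmxDr rho_eD.
  reflexivity.
move=> q x y hq hx hy ex.
rewrite (hl _ (vproperZ hq hx)) -scalemxAr.
rewrite (hl _ hx) in ex.
exact: rhoeq_scale hL1 ex hq.
Qed.

End Main.

Close Scope quotient_scope.

Theorem theorem3p3 (K : fieldType) (n n1 : nat)
  (L : 'M[{poly K}]_n) (L1 : 'M[{poly K}]_n1) :
  nonsingular L -> nonsingular L1 ->
  (forall phi : 'cV[{poly K}]_n -> 'cV[{poly K}]_n1,
     (forall xb, UL L xb -> UL L1 (phi xb)) ->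
     (Kinf_hom L L1 phi <->
      exists Theta Theta1 : 'M[rfun K]_(n1, n),
        mproper Theta /\ mproper Theta1 /\
        Theta *m mx_tofr L = mx_tofr L1 *m Theta1 /\
        (forall xb, UL L xb -> phi xb = rho_e L1 (Theta *m mx_tofr xb))))
  /\
  (forall Theta Theta1 : 'M[rfun K]_(n1, n),
     mproper Theta -> mproper Theta1 ->
     Theta *m mx_tofr L = mx_tofr L1 *m Theta1 ->
     forall x : 'cV[rfun K]_n, vproper x ->
       rho_e L1 (Theta *m mx_tofr (rho L x)) = rho L1 (Theta *m x)).
Proof.
move=> hL hL1; split.
  move=> phi hU; split; [exact: forward | exact: backward].
move=> Th Th1 _ hTh1 e x _; exact: part2 x hL hL1 hTh1 e.
Qed.
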